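(* Fix a state $s$, a receiver utility $u:\mathcal S\times\Omega\times\mathcal A\to[0,1]$, a function $Q:\mathcal S\times\Omega\times\mathcal A\to[0,H]$ and a prior $\mu\in\Delta(\Omega)$ that is $(p_0,D)$-regular at $s$, i.e. $\Pr_{\omega\sim\mu}[\omega\in\mathcal W_{s,a}(D)]\ge p_0$ for every $a\in\mathcal A$. Then for every $\epsilon>0$, $$\mathrm{Gap}\big(s,\mu,\mathbb B(\mu,\epsilon);Q\big)\le\frac{H\epsilon}{p_0D}.$$
   Context: $\mathcal A$ is a finite action set, $\mathcal S$ a state space and $\Omega$ an outcome space; $\Delta(\Omega)$ is the set of probability distributions on $\Omega$ (with densities/mass functions $\mu(\omega)$), and $\|\mu-\mu'\|_1=\int_\Omega|\mu(\omega)-\mu'(\omega)|\,\mathrm d\omega$. A signaling scheme $\pi$ assigns to each $(s,\omega)$ a distribution $\pi(\cdot\mid s,\omega)\in\Delta(\mathcal A)$. For a prior $\mu$ and utility $u$, $\mathrm{Pers}(\mu,u)$ is the set of $\pi$ with $\int_\Omega\mu(\omega)\pi(a\mid s,\omega)[u(s,\omega,a)-u(s,\omega,a')]\,\mathrm d\omega\ge0$ for all $a,a'\in\mathcal A$ and states $s$; for a set $\mathcal B\subseteq\Delta(\Omega)$, $\mathrm{Pers}(\mathcal B,u)=\bigcap_{\mu'\in\mathcal B}\mathrm{Pers}(\mu',u)$. $\langle Q,\mu\otimes\pi\rangle(s)=\mathbb E_{\omega\sim\mu,\,a\sim\pi(\cdot\mid s,\omega)}[Q(s,\omega,a)]$.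 The robustness gap is $\mathrm{Gap}(s,\mu,\mathcal B;Q)=\max_{\pi\in\mathrm{Pers}(\mu,u)}\langle Q,\mu\otimes\pi\rangle(s)-\max_{\pi\in\mathrm{Pers}(\mathcal B,u)}\langle Q,\mu\otimes\pi\rangle(s)$. $\mathbb B(\mu,\epsilon)=\{\mu'\in\Delta(\Omega):\|\mu-\mu'\|_1\le\epsilon\}$. $\mathcal W_{s,a}(D)=\{\omega:u(s,\omega,a)-u(s,\omega,a')\ge D\ \forall a'\in\mathcal A\setminus\{a\}\}$. *)

(* Defs.v *)
From HB Require Import structures.
From mathcomp Require Import all_boot all_order all_algebra.
From mathcomp Require Import all_classical all_reals all_analysis.
Set Implicit Arguments. Unset Strict Implicit. Unset Printing Implicit Defensive.
Import Order.TTheory GRing.Theory Num.Theory.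
Local Open Scope classical_set_scope.
Local Open Scope ring_scope.

Section Defs.
Context {R : realType} {d : measure_display} {Omega : measurableType d}
  (nu : {measure set Omega -> \bar R}).

Definition is_density (mu : Omega -> R) : Prop :=
  [/\ forall w, 0 <= mu w, measurable_fun setT mu &
      (\int[nu]_w (mu w)%:E = 1)%E].

Definition l1dist (mu mu' : Omega -> R) : \bar R :=
  \int[nu]_w (`|mu w - mu' w|)%:E.

Definition l1ball (mu : Omega -> R) (eps : R) : set (Omega -> R) :=
  [set mu' | is_density mu' /\ (l1dist mu mu' <= eps%:E)%E].

Variables (S : Type) (A : finType).

Definition signaling_scheme (pi : S -> Omega -> A -> R) : Prop :=
  (forall s w, (forall a, 0 <= pi s w a) /\ \sum_a pi s w a = 1) /\
  (forall s a, measurable_fun setT (fun w => pi s w a)).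

Definition Pers (mu : Omega -> R) (u : S -> Omega -> A -> R)
  : set (S -> Omega -> A -> R) :=
  [set pi | signaling_scheme pi /\
     forall s a a', (0 <= \int[nu]_w
         (mu w * pi s w a * (u s w a - u s w a'))%:E)%E].

Definition PersB (B : set (Omega -> R)) (u : S -> Omega -> A -> R)
  : set (S -> Omega -> A -> R) :=
  [set pi | signaling_scheme pi /\ forall mu', B mu' -> Pers mu' u pi].

Definition value (Q : S -> Omega -> A -> R) (mu : Omega -> R)
  (pi : S -> Omega -> A -> R) (s : S) : \bar R :=
  \int[nu]_w (mu w * \sum_a pi s w a * Q s w a)%:E.

(* Gap(s, mu, B; Q); the maxima are taken as suprema *)
Definition Gap (u Q : S -> Omega -> A -> R) (s : S) (mu : Omega -> R)
  (B : set (Omega -> R)) : \bar R :=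
  (ereal_sup [set value Q mu pi s | pi in Pers mu u] -
   ereal_sup [set value Q mu pi s | pi in PersB B u])%E.

Definition Wset (u : S -> Omega -> A -> R) (s : S) (a : A) (D : R) : set Omega :=
  [set w | forall a', a' != a -> D <= u s w a - u s w a'].

Definition regular (u : S -> Omega -> A -> R) (s : S) (mu : Omega -> R)
  (p0 D : R) : Prop :=
  forall a, (p0%:E <= \int[nu]_(w in Wset u s a D) (mu w)%:E)%E.

End Defs.

(* Main.v *)
Require Import Defs.
From HB Require Import structures.
From mathcomp Require Import all_boot all_order all_algebra.
From mathcomp Require Import all_classical all_reals all_analysis.
From mathcomp Require Import ring lra measurable_realfun measurable_fun_approximation.
Import Order.TTheory GRing.Theory Num.Theory.
Local Open Scope classical_set_scope.
Local Open Scope ring_scope.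

Section Sig.
Context {R : realType} {d : measure_display} {Omega : measurableType d}
  {S : Type} {A : finType} (u : S -> Omega -> A -> R)
  (mu_ : forall s' a, measurable_fun setT (fun w => u s' w a)).

Definition Pmax s' w a := all (fun b => u s' w b <= u s' w a) (enum A).
Definition Sel s' w a := Pmax s' w a &&
  all (fun b => (enum_rank b < enum_rank a)%N ==> ~~ Pmax s' w b) (enum A).
Definition sig s' w a : R := if Sel s' w a then 1 else 0.

Lemma all_meas {T : Type} (s : seq T) (P : T -> Omega -> bool) :
  (forall t, measurable_fun setT (P t)) ->
  measurable_fun setT (fun w => all (fun t => P t w) s).
Proof.
move=> HP; elim: s => [|t s IH] /=; first exact: measurable_cst.
exact: measurable_and.
Qed.

Lemma Pmax_meas s' a : measurable_fun setT (fun w => Pmax s' w a).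
Proof.
apply: (all_meas (enum A) (fun b w => u s' w b <= u s' w a)) => b.
exact: measurable_fun_ler.
Qed.

Lemma Sel_meas s' a : measurable_fun setT (fun w => Sel s' w a).
Proof.
apply: measurable_and; first exact: Pmax_meas.
apply: (all_meas (enum A) (fun b w => (enum_rank b < enum_rank a)%N ==> ~~ Pmax s' w b)) => b.
case: (_ < _)%N => /=; last exact: measurable_cst.
exact/measurable_neg/Pmax_meas.
Qed.

Lemma sig_meas s' a : measurable_fun setT (fun w => sig s' w a).
Proof.
apply: measurable_fun_ifT; first exact: Sel_meas.
- exact: measurable_cst.
- exact: measurable_cst.
Qed.

Lemma PmaxP s' w a : Pmax s' w a <-> forall b, u s' w b <= u s' w a.
Proof.
split => [/allP H b|H]; first by apply: H; rewrite mem_enum.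
by apply/allP => b _; apply: H.
Qed.

Lemma Sel_ex s' w (a0 : A) : exists a, Sel s' w a.
Proof.
have [am _ Ham] := @arg_maxP _ _ A a0 predT (fun b => u s' w b) isT.
have Pam : Pmax s' w am by apply/PmaxP => b; exact: Ham.
have [a2 Pa2 Ha2] := arg_minnP (fun b => nat_of_ord (enum_rank b)) Pam.
exists a2; apply/andP; split => //; apply/allP => b _; apply/implyP => hb.
by apply/negP => Pb; have := Ha2 b Pb; rewrite leqNgt hb.
Qed.

Lemma Sel_uniq s' w a b : Sel s' w a -> Sel s' w b -> a = b.
Proof.
move=> /andP[Pa /allP Ha] /andP[Pb /allP Hb].
case: (ltngtP (enum_rank a) (enum_rank b)) => h.
- by have := Hb a (mem_enum _ a); rewrite h Pa.
- by have := Ha b (mem_enum _ b); rewrite h Pb.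
- by apply/enum_rank_inj/val_inj.
Qed.

Lemma sig_sum s' w (a0 : A) : \sum_a sig s' w a = 1.
Proof.
have [a Ha] := Sel_ex s' w a0.
rewrite (bigD1 a) //= big1 ?addr0 /sig ?Ha // => b hb.
case: ifP => // Hbs; by rewrite (Sel_uniq _ _ _ _ Hbs Ha) eqxx in hb.
Qed.

Lemma sig01 s' w a : 0 <= sig s' w a <= 1.
Proof. by rewrite /sig; case: ifP => _; rewrite ?lexx ?ler01. Qed.

Lemma sig_pt s' w a a' : 0 <= sig s' w a * (u s' w a - u s' w a').
Proof.
rewrite /sig; case: ifP => [/andP[/PmaxP Pa _]|_]; last by rewrite mul0r.
by rewrite mul1r subr_ge0.
Qed.

Lemma sig_W s a D w : 0 < D -> Wset u s a D w -> sig s w a = 1.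
Proof.
move=> D0 HW; rewrite /sig; suff -> : Sel s w a by [].
have Pa : Pmax s w a.
  apply/PmaxP => b; have [->|nb] := eqVneq b a; first exact: lexx.
  have := HW b nb; lra.
rewrite /Sel Pa /=; apply/allP => b _; apply/implyP => hb; apply/negP => /PmaxP Pb.
have nb : b != a by apply: contraTneq hb => ->; rewrite ltnn.
have := HW b nb; have := Pb a; lra.
Qed.

End Sig.
Section Int.
Context {R : realType} {d : measure_display} {Omega : measurableType d}
  (nu : {measure set Omega -> \bar R}).

Lemma dens_int m : is_density nu m -> nu.-integrable setT (EFin \o m).
Proof.
case=> m0 mm i1; apply/integrableP; split; first exact/measurable_EFinP.
rewrite /=; under eq_integral => w _ do rewrite ger0_norm //.
by rewrite i1 ltry.
Qed.

Lemma dom_int (m m' f : Omega -> R) (k : R) : is_density nu m -> is_density nu m' ->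
  0 <= k -> measurable_fun setT f -> (forall w, `|f w| <= k * (m w + m' w)) ->
  nu.-integrable setT (EFin \o f).
Proof.
move=> Hm Hm' k0 mf Hf.
apply: (@le_integrable _ _ _ nu _ measurableT (EFin \o f) (fun w => (k%:E * ((m w)%:E + (m' w)%:E))%E)).
- exact/measurable_EFinP.
- move=> w _ /=; rewrite lee_fin.
  apply: le_trans (Hf w) _; rewrite ger0_norm //.
  case: Hm => /(_ w) m0 _ _; case: Hm' => /(_ w) m0' _ _; nra.
- apply: integrableZl => //; exact: (integrableD measurableT (dens_int _ Hm) (dens_int _ Hm')).
Qed.

Lemma boolset_meas (f : Omega -> bool) : measurable_fun setT f ->
  measurable [set w | f w].
Proof.
move=> mf; have := mf measurableT [set true] I.
by rewrite setTI; congr measurable; apply/seteqP; split => w /=.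
Qed.

End Int.

Lemma key (R : realType) (m m' p s dl δ t : R) :
  0 <= m -> 0 <= p <= 1 -> 0 <= s <= 1 -> -1 <= dl <= 1 -> 0 <= δ <= 1 ->
  t <= s * dl ->
  (1 - δ) * (m * p * dl) - `|m - m'| + δ * t * m
    <= m' * ((1 - δ) * p + δ * s) * dl.
Proof.
move=> m0 /andP[p0 p1] /andP[s0 s1] /andP[dl0 dl1] /andP[δ0 δ1] tsd.
set X := (1 - δ) * p * dl + δ * (s * dl).
have X1 : `|X| <= 1.
  have pd1 : p * dl <= 1 by nra.
  have pd0 : -1 <= p * dl by nra.
  have sd1 : s * dl <= 1 by nra.
  have sd0 : -1 <= s * dl by nra.
  have h1 : 0 <= (1 - δ) * (1 - p * dl) by apply: mulr_ge0; lra.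
  have h2 : 0 <= δ * (1 - s * dl) by apply: mulr_ge0; lra.
  have h3 : 0 <= (1 - δ) * (p * dl + 1) by apply: mulr_ge0; lra.
  have h4 : 0 <= δ * (s * dl + 1) by apply: mulr_ge0; lra.
  rewrite ler_norml; apply/andP; split; rewrite /X; nra.
have E1 : - `|m - m'| <= (m' - m) * X.
  have := ler_norm ((m - m') * X); rewrite normrM.
  have : `|m - m'| * `|X| <= `|m - m'| by have := normr_ge0 (m - m'); nra.
  move=> h1 h2.
  have -> : (m' - m) * X = - ((m - m') * X) by ring.
  rewrite lerN2; lra.
have E2 : (1 - δ) * (m * p * dl) + δ * t * m <= m * X.
  rewrite /X; have : 0 <= m * δ by nra. nra.
have -> : m' * ((1 - δ) * p + δ * s) * dl = m * X + (m' - m) * X by rewrite /X; ring.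
lra.
Qed.
Section P.
Context {R : realType} {d : measure_display} {Omega : measurableType d}
  (nu : {measure set Omega -> \bar R}) {S : Type} {A : finType}.

Lemma W_meas (u : S -> Omega -> A -> R) s a D :
  (forall s' a, measurable_fun setT (fun w => u s' w a)) ->
  measurable (Wset u s a D).
Proof.
move=> mu_.
have -> : Wset u s a D =
    [set w | all (fun b => (b != a) ==> (D <= u s w a - u s w b)) (enum A)].
  apply/seteqP; split => w /=.
  - by move=> HW; apply/allP => b _; apply/implyP => hb; exact: HW.
  - by move=> /allP HW b hb; have /implyP := HW b (mem_enum _ b); apply.
apply: boolset_meas.
apply: (all_meas (enum A) (fun b w => (b != a) ==> (D <= u s w a - u s w b))) => b.
case: (b != a) => /=; last exact: measurable_cst.
apply: measurable_fun_ler; first exact: measurable_cst.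
exact: measurable_funB.
Qed.

Lemma pers_mix (u pi : S -> Omega -> A -> R) s a a' m m' δ D p0 eps :
  (forall s' w a, 0 <= u s' w a <= 1) ->
  (forall s' a, measurable_fun setT (fun w => u s' w a)) ->
  is_density nu m -> is_density nu m' -> (l1dist nu m m' <= eps%:E)%E ->
  (forall w, 0 <= pi s w a <= 1) -> measurable_fun setT (fun w => pi s w a) ->
  (0 <= \int[nu]_w (m w * pi s w a * (u s w a - u s w a'))%:E)%E ->
  (p0%:E <= \int[nu]_(w in Wset u s a D) (m w)%:E)%E ->
  0 < D -> 0 <= δ <= 1 -> eps <= δ * D * p0 -> a != a' ->
  (0 <= \int[nu]_w (m' w * ((1 - δ) * pi s w a + δ * sig u s w a)
                     * (u s w a - u s w a'))%:E)%E.
Proof.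
move=> u01 mu_ Hm Hm' Hl1 pi01 mpi Hpers Hreg D0 /andP[δ0 δ1] Heps naa.
have [m0 mm i1] := Hm; have [m0' mm' i1'] := Hm'.
set W := Wset u s a D.
have mW : measurable W by exact: W_meas.
set f1 := fun w => m w * pi s w a * (u s w a - u s w a').
set e := fun w => `|m w - m' w|.
set g := fun w => m' w * ((1 - δ) * pi s w a + δ * sig u s w a) * (u s w a - u s w a').
have mdl : measurable_fun setT (fun w => u s w a - u s w a') by exact: measurable_funB.
have mf1 : measurable_fun setT f1 by apply: measurable_funM => //; exact: measurable_funM.
have me : measurable_fun setT e.
  by apply: measurableT_comp; [exact: normr_measurable | exact: measurable_funB].
have mg : measurable_fun setT g.
  apply: measurable_funM => //; apply: measurable_funM => //.
  apply: measurable_funD; apply: measurable_funM => //; exact: sig_meas.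
have dl1 : forall w, -1 <= u s w a - u s w a' <= 1.
  by move=> w; have := u01 s w a; have := u01 s w a'; move=> /andP[? ?] /andP[? ?]; apply/andP; split; lra.
have if1 : nu.-integrable setT (EFin \o f1).
  apply: (@dom_int _ _ _ nu m m' f1 1 Hm Hm') => // w; rewrite mul1r /f1 !normrM.
  have /andP[pa pb] := pi01 w; have := dl1 w; rewrite -ler_norml => hd.
  rewrite (ger0_norm (m0 w)) (ger0_norm pa).
  have h1 : 0 <= m w * pi s w a * (1 - `|u s w a - u s w a'|).
    by apply: mulr_ge0; [apply: mulr_ge0 | lra].
  have h2 : 0 <= m w * (1 - pi s w a) by apply: mulr_ge0 => //; lra.
  have := m0' w; nra.
have ie : nu.-integrable setT (EFin \o e).
  apply: (@dom_int _ _ _ nu m m' e 1 Hm Hm') => // w; rewrite mul1r /e normr_id.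
  by apply: le_trans (ler_normB _ _) _; rewrite !ger0_norm.
have ig : nu.-integrable setT (EFin \o g).
  apply: (@dom_int _ _ _ nu m m' g 1 Hm Hm') => // w; rewrite mul1r /g !normrM.
  have /andP[pa pb] := pi01 w; have := dl1 w; rewrite -ler_norml => hd.
  have /andP[sa sb] := sig01 u s w a.
  have hY : 0 <= (1 - δ) * pi s w a + δ * sig u s w a.
    by apply: addr_ge0; apply: mulr_ge0 => //; lra.
  have hY1 : (1 - δ) * pi s w a + δ * sig u s w a <= 1.
    have : (1 - δ) * pi s w a <= 1 - δ by rewrite ler_piMr //; lra.
    have : δ * sig u s w a <= δ by rewrite ler_piMr.
    lra.
  rewrite (ger0_norm (m0' w)) (ger0_norm hY).
  set Y := (1 - δ) * _ + _ in hY hY1 *.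
  have h1 : 0 <= m' w * Y * (1 - `|u s w a - u s w a'|).
    by apply: mulr_ge0; [apply: mulr_ge0 | lra].
  have h2 : 0 <= m' w * (1 - Y) by apply: mulr_ge0 => //; lra.
  have := m0 w; nra.
have iW : nu.-integrable setT ((EFin \o m) \_ W).
  apply: (integrable_mkcond _ mW).1.
  exact: (integrableS measurableT mW (@subsetT _ W) (dens_int nu _ Hm)).
set h := fun w => (((1 - δ) * f1 w - e w)%:E + (δ * D)%:E * ((EFin \o m) \_ W) w)%E.
have ih1 : nu.-integrable setT (EFin \o (fun w => (1 - δ) * f1 w - e w)).
  apply: (@dom_int _ _ _ nu m m' _ 2 Hm Hm') => //.
    by apply: measurable_funB => //; apply: measurable_funM.
  move=> w; apply: le_trans (ler_normB _ _) _.
  rewrite normrM /e normr_id (ger0_norm (_ : 0 <= 1 - δ)); last lra.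
  have : `|f1 w| <= m w + m' w.
    move: if1 => _; rewrite /f1 !normrM.
    have /andP[pa pb] := pi01 w; have := dl1 w; rewrite -ler_norml => hd.
    rewrite (ger0_norm (m0 w)) (ger0_norm pa).
    have h1 : 0 <= m w * pi s w a * (1 - `|u s w a - u s w a'|).
      by apply: mulr_ge0; [apply: mulr_ge0 | lra].
    have h2 : 0 <= m w * (1 - pi s w a) by apply: mulr_ge0 => //; lra.
    have := m0' w; nra.
  have : `|m w - m' w| <= m w + m' w.
    by apply: le_trans (ler_normB _ _) _; rewrite !ger0_norm.
  have := normr_ge0 (f1 w); have := m0 w; have := m0' w; nra.
have ih2 : nu.-integrable setT (fun w => (δ * D)%:E * ((EFin \o m) \_ W) w)%E.
  exact: integrableZl.
apply: (@le_trans _ _ (\int[nu]_w h w)%E).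
  rewrite /h (integralD measurableT ih1 ih2).
  rewrite (integralZl measurableT iW) -integral_mkcond.
  have if1' : nu.-integrable setT (EFin \o (fun w => (1 - δ) * f1 w)).
    apply: (eq_integrable measurableT _ _ _ (integrableZl measurableT (1 - δ) if1)).
    by move=> w _; rewrite /= EFinM.
  have -> : (\int[nu]_x (EFin \o (fun w => ((1 - δ) * f1 w - e w)%R)) x =
      \int[nu]_x (((1 - δ) * f1 x)%:E - (e x)%:E))%E by [].
  rewrite (integralB_EFin measurableT if1' ie).
  have -> : (\int[nu]_x ((1 - δ) * f1 x)%:E = ((1 - δ)%:E * \int[nu]_x (f1 x)%:E))%E.
    exact: (integralZl measurableT if1 (1 - δ)).
  have E1 : (0 <= (1 - δ)%:E * \int[nu]_x (f1 x)%:E)%E.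
    by apply: mule_ge0 => //; rewrite lee_fin; lra.
  have E2 : (- eps%:E <= - \int[nu]_x (e x)%:E)%E by rewrite leeN2.
  have E3 : (eps%:E <= (δ * D)%:E * \int[nu]_(x in W) (EFin \o m) x)%E.
    apply: (@le_trans _ _ ((δ * D)%:E * p0%:E)%E).
      by rewrite -EFinM lee_fin.
    apply: lee_wpmul2l; first by rewrite lee_fin; apply: mulr_ge0 => //; lra.
    exact: Hreg.
  apply: (@le_trans _ _ (0 + - eps%:E + eps%:E)%E).
    by rewrite add0e -EFinN -EFinD addNr.
  by apply: leeD => //; apply: leeD.
apply: le_integral => //.
- exact: (integrableD measurableT ih1 ih2).

move=> w _; rewrite /h /g /f1 /e.
have Hk := @key R (m w) (m' w) (pi s w a) (sig u s w a) (u s w a - u s w a') δ.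
have hp := pi01 w; have hs := sig01 u s w a; have hd := dl1 w.
have hδ : 0 <= δ <= 1 by rewrite δ0 δ1.
have [Ww|nWw] := pselect (W w).
- rewrite patchE mem_set //= -EFinM -EFinD lee_fin.
  apply: Hk => //.
  rewrite (sig_W _ _ _ _ _ D0 Ww) mul1r; apply: Ww; by rewrite eq_sym.
- rewrite patchE memNset //= mule0 adde0 lee_fin.
  have := Hk 0 (m0 w) hp hs hd hδ (sig_pt u s w a a').
  by rewrite mulr0 mul0r addr0.
Qed.

End P.
Section V.
Context {R : realType} {d : measure_display} {Omega : measurableType d}
  (nu : {measure set Omega -> \bar R}) {S : Type} {A : finType}.

Lemma value_mix (Q pi pi2 rho : S -> Omega -> A -> R) (H δ : R) (s : S) m :
  is_density nu m -> (forall w a, 0 <= Q s w a <= H) ->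
  (forall a, measurable_fun setT (fun w => Q s w a)) ->
  (forall w a, 0 <= pi s w a) -> (forall w, \sum_a pi s w a = 1) ->
  (forall a, measurable_fun setT (fun w => pi s w a)) ->
  (forall w a, 0 <= rho s w a) ->
  (forall a, measurable_fun setT (fun w => pi2 s w a)) ->
  0 <= δ <= 1 -> (forall w a, pi2 s w a = (1 - δ) * pi s w a + δ * rho s w a) ->
  (value nu Q m pi s <= value nu Q m pi2 s + (δ * H)%:E)%E.
Proof.
move=> [m0 mm i1] HQ mQ pi0 pi1 mpi rho0 mpi2 /andP[δ0 δ1] Hpi2.
rewrite /value.
have mv : forall p : S -> Omega -> A -> R, (forall a, measurable_fun setT (fun w => p s w a)) ->
    measurable_fun setT (fun w => (m w * \sum_a p s w a * Q s w a)%:E).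
  move=> p mp; apply/measurable_EFinP; apply: measurable_funM => //.
  by apply: measurable_sum => a; apply: measurable_funM.
have sg : forall p : S -> Omega -> A -> R, (forall w a, 0 <= p s w a) -> forall w,
    0 <= \sum_a p s w a * Q s w a.
  move=> p p0 w; apply: sumr_ge0 => a _; apply: mulr_ge0 => //.
  by case/andP: (HQ w a).
have pi2_0 : forall w a, 0 <= pi2 s w a.
  move=> w a; rewrite Hpi2; apply: addr_ge0; apply: mulr_ge0 => //; lra.
have a0 : A.
  case: (pickP (@predT A)) => [a _|h]; first exact: a.
  exfalso; have := pi1 point; by rewrite big_pred0 // => /eqP; rewrite eq_sym oner_eq0.
have H0 : 0 <= H by have /andP[h1 h2] := HQ point a0; exact: le_trans h1 h2.
apply: (@le_trans _ _ (\int[nu]_w ((m w * \sum_a pi2 s w a * Q s w a)%:E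
                                    + (δ * H)%:E * (m w)%:E))%E).
  apply: ge0_le_integral => //.
  - by move=> w _; rewrite lee_fin; apply: mulr_ge0 => //; exact: sg.
  - exact: mv.
  - apply: emeasurable_funD; first exact: mv.
    by apply: measurable_funeM; exact/measurable_EFinP.
  - move=> w _; rewrite -EFinM -EFinD lee_fin.
    have -> : \sum_a pi2 s w a * Q s w a = (1 - δ) * (\sum_a pi s w a * Q s w a)
        + δ * \sum_a rho s w a * Q s w a.
      rewrite !mulr_sumr -big_split /=; apply: eq_bigr => a _; rewrite Hpi2; ring.
    have SH : \sum_a pi s w a * Q s w a <= H.
      apply: (@le_trans _ _ (\sum_a pi s w a * H)).
        by apply: ler_sum => a _; apply: ler_wpM2l => //; case/andP: (HQ w a).
      by rewrite -mulr_suml pi1 mul1r.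
    have Sr := sg rho rho0 w.
    set P := \sum_a pi s w a * Q s w a in SH *; set Rr := \sum_a _ in Sr *.
    have h1 : 0 <= m w * δ * (H - P) by apply: mulr_ge0; [apply: mulr_ge0|lra].
    have h2 : 0 <= m w * δ * Rr by apply: mulr_ge0 => //; apply: mulr_ge0.
    nra.
rewrite ge0_integralD //.
- rewrite ge0_integralZl //; last by rewrite lee_fin; apply: mulr_ge0 => //; exact: H0.
  + by rewrite i1 mule1.
  + exact/measurable_EFinP.
  + by move=> w _; rewrite lee_fin.
- by move=> w _; rewrite lee_fin; apply: mulr_ge0 => //; exact: sg.
- exact: mv.
- by move=> w _; rewrite -EFinM lee_fin; apply: mulr_ge0 => //; apply: mulr_ge0.
- by apply: measurable_funeM; exact/measurable_EFinP.
Qed.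

End V.
Theorem mainTheorem7 (R : realType) (d : measure_display) (Omega : measurableType d)
  (nu : {measure set Omega -> \bar R}) (S : Type) (A : finType)
  (u Q : S -> Omega -> A -> R) (H p0 D : R) (s : S) (mu : Omega -> R) :
  (forall s' w a, 0 <= u s' w a <= 1) ->
  (forall s' w a, 0 <= Q s' w a <= H) ->
  (forall s' a, measurable_fun setT (fun w => u s' w a)) ->
  (forall s' a, measurable_fun setT (fun w => Q s' w a)) ->
  0 < p0 -> 0 < D ->
  is_density nu mu ->
  regular nu u s mu p0 D ->
  forall eps : R, 0 < eps ->
  (Gap nu u Q s mu (l1ball nu mu eps) <= (H * eps / (p0 * D))%:E)%E.
Proof.
move=> u01 Q0H mu_ mQ p00 D0 Hmu Hreg eps eps0.
set δ := eps / (p0 * D).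
have δ0 : 0 < δ by apply: divr_gt0 => //; apply: mulr_gt0.
have [δ' [hδ'0 hδ'1 hδ'δ hcase]] :
    exists δ', [/\ 0 <= δ', δ' <= 1, δ' <= δ & (δ' = 1 \/ δ' = δ)].
  case: (leP δ 1) => h; [exists δ | exists 1]; split; try lra; by [right|left].
pose pi' := fun pi : S -> Omega -> A -> R => fun s' w a =>
  if `[< s' = s >] then (1 - δ') * pi s' w a + δ' * sig u s' w a else sig u s' w a.
have ML : forall pi, Pers nu mu u pi ->
    PersB nu (l1ball nu mu eps) u (pi' pi) /\
    (value nu Q mu pi s <= value nu Q mu (pi' pi) s + (H * eps / (p0 * D))%:E)%E.
  move=> pi [[Hsch Hmeas] Hpers].
  have a0 : A.
    case: (pickP (@predT A)) => [a _|h]; first exact: a.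
    exfalso; have [_ ] := Hsch s point.
    by rewrite big_pred0 // => /eqP; rewrite eq_sym oner_eq0.
  have pi01 : forall s' w a, 0 <= pi s' w a <= 1.
    move=> s' w a; have [h0 h1] := Hsch s' w; rewrite h0 /= -h1.
    by rewrite (bigD1 a) //= lerDl sumr_ge0.
  have Hsch' : signaling_scheme (pi' pi).
    split.
    - move=> s' w; rewrite /pi'; case: asboolP => _; split.
      + move=> a; apply: addr_ge0; apply: mulr_ge0 => //; try lra.
          by have /andP[] := pi01 s' w a.
        by have /andP[] := sig01 u s' w a.
      + rewrite big_split /= -!mulr_sumr (Hsch s' w).2 (sig_sum u s' w a0); ring.
      + by move=> a; have /andP[] := sig01 u s' w a.
      + exact: (sig_sum u s' w a0).
    - move=> s' a; rewrite /pi'; case: asboolP => _; last exact: sig_meas.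
      apply: measurable_funD; apply: measurable_funM => //; exact: sig_meas.
  split.
    split => // mu' [Hmu' Hl1]; split => // s' a a'.
    have [<-|naa] := eqVneq a a'.
      by apply: integral_ge0 => w _; rewrite subrr mulr0.
    have [->|ns] := pselect (s' = s); last first.
      rewrite /pi' asboolF //; apply: integral_ge0 => w _; rewrite lee_fin -mulrA.
      by apply: mulr_ge0; [case: Hmu' => ? _ _ | exact: sig_pt].
    rewrite /pi' asboolT //.
    case: hcase => [hd1|hdd].
      apply: integral_ge0 => w _; rewrite lee_fin hd1 subrr mul0r add0r mul1r -mulrA.
      by apply: mulr_ge0; [case: Hmu' => ? _ _ | exact: sig_pt].
    rewrite hdd; apply: (pers_mix nu u pi s a a' mu mu' δ D p0 eps) => //.
    - by rewrite -hdd hδ'0 hδ'1.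
    - rewrite /δ le_eqVlt; apply/orP; left; apply/eqP; field.
      by rewrite gt_eqF // gt_eqF.
  apply: le_trans (value_mix nu Q pi (pi' pi) (sig u) H δ' s mu Hmu _ _ _ _ _ _ _ _ _) _.
  - by move=> w a; exact: Q0H.
  - exact: mQ.
  - by move=> w a; have /andP[] := pi01 s w a.
  - exact: (fun w => (Hsch s w).2).
  - exact: Hmeas.
  - by move=> w a; have /andP[] := sig01 u s w a.
  - exact: Hsch'.2.
  - by rewrite hδ'0 hδ'1.
  - by move=> w a; rewrite /pi' asboolT.
  - apply: leeD2l; rewrite lee_fin.
    have H0 : 0 <= H by have /andP[h1 h2] := Q0H s point a0; exact: le_trans h1 h2.
    rewrite -mulrA -/δ mulrC; exact: ler_wpM2l.
rewrite /Gap lee_subel_addr //.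
apply: ub_ereal_sup => _ [pi Hpi <-].
have [HB Hv] := ML pi Hpi.
apply: le_trans Hv _; rewrite addeC; apply: leeD2l.
by apply: ereal_sup_ubound; exists (pi' pi).
Qed.
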